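(* Let $m,n$ be positive integers and let $U=\begin{pmatrix} A & B\\ C & D\end{pmatrix}$ be an $(m+n)\times(m+n)$ unitary matrix decomposed with respect to $\mathbb C^m\oplus\mathbb C^n$. Let $\Psi(z)=A+zB(I-zD)^{-1}C$ and $\Psi'(w)=D^*+wB^*(I-wA^* )^{-1}C^*$. Then $$\{(z,w)\in\mathbb D^2:\det(\Psi(z)-wI)=0\}=\{(z,w)\in\mathbb D^2:\det(\Psi'(w)-zI)=0\}=\left\{(z,w)\in\mathbb D^2:\det\begin{pmatrix} A-wI & zB\\ C & zD-I\end{pmatrix}=0\right\},$$ and this set $V$, if non-empty, is a distinguished variety.
   Context: $\mathbb D$ is the open unit disk and $\mathbb D^2$ the open bidisk. A non-empty set $V\subseteq\mathbb C^2$ is a distinguished variety if there is a polynomial $p\in\mathbb C[z,w]$ with $V=\{(z,w)\in\mathbb D^2: p(z,w)=0\}$ and $\overline V\cap\partial(\mathbb D^2)=\overline V\cap(\partial\mathbb D)^2$, where $\partial\mathbb D$ is the unit circle. *)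

(* Defs.v *)
From HB Require Import structures.
From mathcomp Require Import all_boot all_order all_algebra.
From mathcomp Require Import sesquilinear spectral.
From mathcomp Require Import complex.
From mathcomp Require Import reals.
Set Implicit Arguments. Unset Strict Implicit. Unset Printing Implicit Defensive.
Import Order.TTheory GRing.Theory Num.Theory.
Local Open Scope ring_scope.

Section Defs.
Variable R : realType.
Local Notation C := (R[i]).

Definition in_disk (z : C) : Prop := `|z| < 1.
Definition in_bidisk (x : C * C) : Prop := in_disk x.1 /\ in_disk x.2.
Definition in_circle (z : C) : Prop := `|z| = 1.
Definition in_torus (x : C * C) : Prop := in_circle x.1 /\ in_circle x.2.

(* Euclidean topology of C^2, via the (equivalent) max-norm balls *)
Definition near2 (x y : C * C) (e : R) : Prop :=
  `|x.1 - y.1| < (real_complex R e) /\ `|x.2 - y.2| < (real_complex R e).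

Definition closure2 (S : C * C -> Prop) (x : C * C) : Prop :=
  forall e : R, 0 < e -> exists y, S y /\ near2 x y e.

Definition boundary2 (S : C * C -> Prop) (x : C * C) : Prop :=
  closure2 S x /\ closure2 (fun y => ~ S y) x.

(* evaluation of a polynomial p in C[z,w], represented as {poly {poly C}}
   with outer variable w and inner variable z *)
Definition peval2 (p : {poly {poly C}}) (z w : C) : C := (p.[w%:P]).[z].

Definition distinguished_variety (V : C * C -> Prop) : Prop :=
  (exists x, V x) /\
  exists p : {poly {poly C}},
    (forall x : C * C, V x <-> (in_bidisk x /\ peval2 p x.1 x.2 = 0)) /\
    (forall x : C * C, closure2 V x -> boundary2 in_bidisk x -> in_torus x).

End Defs.

(* Main.v *)
Require Import Defs.
From Stdlib Require Classical_Prop.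
From HB Require Import structures.
From mathcomp Require Import all_boot all_order all_algebra.
From mathcomp Require Import sesquilinear spectral.
From mathcomp Require Import complex.
From mathcomp Require Import reals.
From mathcomp Require Import zify.
From mathcomp Require Import lra.
Import Order.TTheory GRing.Theory Num.Theory.
Local Open Scope ring_scope.
Local Open Scope sesquilinear_scope.
Set Implicit Arguments. Unset Strict Implicit. Unset Printing Implicit Defensive.

Section Gen.
Variable F : numClosedFieldType.
Definition nrm k (v : 'rV[F]_k) : F := dotmx v v.
Lemma nrm_ge0 k (v : 'rV[F]_k) : 0 <= nrm v.
Proof. exact: (dnorm_ge0 (@dotmx F k)). Qed.
Lemma nrm_eq0 k (v : 'rV[F]_k) : nrm v = 0 -> v = 0.
Proof. by move/eqP; rewrite /nrm dnorm_eq0 => /eqP. Qed.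
Lemma nrm0 k : nrm (0 : 'rV[F]_k) = 0.
Proof. by apply/eqP; rewrite /nrm dnorm_eq0. Qed.
Lemma nrmZ k (c : F) (v : 'rV[F]_k) : nrm (c *: v) = `|c| ^+ 2 * nrm v.
Proof. exact: (dnormZ (@dotmx F k)). Qed.
Lemma adjM m n p (A : 'M[F]_(m,n)) (B : 'M_(n,p)) : (A *m B)^t* = B^t* *m A^t*.
Proof. by rewrite trmx_mul map_mxM. Qed.
Lemma nrm_unitary k (W : 'M[F]_k) (v : 'rV_k) : W *m W^t* = 1%:M -> nrm (v *m W) = nrm v.
Proof. by move=> hW; rewrite /nrm !dotmxE adjM mulmxA -(mulmxA v) hW mulmx1. Qed.
Lemma nrm_row k l (x : 'rV[F]_k) (y : 'rV[F]_l) : nrm (row_mx x y) = nrm x + nrm y.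
Proof. by rewrite /nrm !dotmxE tr_row_mx map_col_mx mul_row_col mxE. Qed.

Lemma num_aux (a t : F) : 0 <= a -> 0 <= t -> t < 1 -> a <= t * a -> a = 0.
Proof.
move=> a0 t0 t1 h; case: (eqVneq a 0) => // ha.
have apos : 0 < a by rewrite lt_def ha a0.
by have := gtr_pMl t apos; rewrite t1 => /(lt_le_trans)/(_ h); rewrite ltxx.
Qed.
End Gen.

Lemma max_ex (P : nat -> Prop) N i0 : P i0 -> (forall i, P i -> (i <= N)%N) ->
  exists i, P i /\ forall j, P j -> (j <= i)%N.
Proof.
move=> Pi0 bnd.
suff H : forall d i, P i -> (N - i <= d)%N -> exists i, P i /\ forall j, P j -> (j <= i)%N.
  exact: (H N i0 Pi0 (leq_subr _ _)).
elim=> [|d IH] i Pi hd.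
  exists i; split=> // j Pj; have := bnd _ Pj; lia.
case: (Classical_Prop.classic (exists j, P j /\ (i < j)%N)) => [[j [Pj ij]]|nj].
  apply: (IH j Pj); have := bnd _ Pj => jN; lia.
exists i; split=> // j Pj; rewrite leqNgt; apply/negP => ij; apply: nj.
by exists j.
Qed.

Local Notation "B ^!" :=
  (orthomx Num.Def.conjC (mx_of_hermitian (hermitian1mx _)) B) : matrix_set_scope.

Section Proj.
Variable F : numClosedFieldType.
Variables (k j l : nat) (X : 'M[F]_k) (Y : 'M[F]_(j, k)) (Z : 'M[F]_(k, l)).

Definition good r (S : 'M[F]_(r, k)) :=
  [&& (S *m X <= S)%MS, (S *m X^t* <= S)%MS, (S <= kermx (Y^t*))%MS
    & (S <= kermx Z)%MS].

Lemma good_adds r1 r2 (S : 'M_(r1, k)) (T : 'M_(r2, k)) :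
  good S -> good T -> good (S + T)%MS.
Proof.
case/and4P=> s1 s2 s3 s4 /and4P[t1 t2 t3 t4]; apply/and4P; split.
- by rewrite addsmxMr addsmxS.
- by rewrite addsmxMr addsmxS.
- by rewrite addsmx_sub s3.
- by rewrite addsmx_sub s4.
Qed.

Lemma good0 : good (0 : 'M_k).
Proof. by rewrite /good !mul0mx !sub0mx. Qed.

Lemma exists_max : exists S : 'M_k, good S /\
  forall r (T : 'M_(r, k)), good T -> (T <= S)%MS.
Proof.
have bnd : forall i, (exists S : 'M_k, good S /\ \rank S = i) -> (i <= k)%N.
  by move=> i [S [_ <-]]; exact: rank_leq_col.
have [i [[S [gS rS]] mx]] := @max_ex (fun i => exists S : 'M_k, good S /\ \rank S = i)
  k 0 (ex_intro _ 0 (conj good0 (mxrank0 _ _ _))) bnd.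
exists S; split=> // r T gT.
have gST := good_adds gS gT.
have := mx _ (ex_intro _ _ (conj gST erefl)); rewrite -rS => h.
have := mxrank_leqif_sup (addsmxSl S T); case=> h1 h2.
have : (\rank S == \rank (S + T)%MS) by rewrite eqn_leq h1 h.
by rewrite h2 addsmx_sub => /andP[].
Qed.
End Proj.

Section Proj2.
Variable F : numClosedFieldType.
Variables (k j l : nat) (X : 'M[F]_k) (Y : 'M[F]_(j, k)) (Z : 'M[F]_(k, l)).
Variable S : 'M[F]_k.
Hypothesis gS : good X Y Z S.
Local Notation P := (proj_ortho S).

Lemma Pidem : P *m P = P.
Proof. exact: proj_ortho_proj. Qed.
Lemma Pfix r (v : 'M_(r, k)) : (v <= S)%MS -> v *m P = v.
Proof. exact: proj_ortho_id. Qed.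
Lemma Psub r (v : 'M_(r, k)) : (v *m P <= S)%MS.
Proof. exact: proj_ortho_sub. Qed.

Lemma ortho_stable r (T : 'M_(r, k)) : (T <= S^!)%MS -> (T *m X <= S^!)%MS.
Proof.
case/and4P: gS => _ s2 _ _.
rewrite !orthomx1E => /eqP hT; apply/eqP.
case/submxP: s2 => Q hQ.
have : (S *m X^t*)^t* = (Q *m S)^t* by rewrite hQ.
rewrite !adjM trmxCK => e.
by rewrite -mulmxA e mulmxA hT mul0mx.
Qed.

Lemma YP : Y *m P = 0.
Proof.
apply: proj_ortho_0; rewrite orthomx1E.
case/and4P: gS => _ _ /sub_kermxP s3 _.
have : (S *m Y^t*)^t* = 0 by rewrite s3 /= trmx0 map_mx0.
by rewrite adjM trmxCK => ->.
Qed.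

Lemma PX : P *m X = X *m P.
Proof.
case/and4P: gS => s1 _ _ _.
have key : forall r (W : 'M_(r, k)), W *m P *m X = W *m X *m P.
  move=> r W.
  have e : W = W *m P + (W - W *m P) by rewrite addrC subrK.
  rewrite {2}e mulmxDl mulmxDl.
  rewrite (proj_ortho_0 (ortho_stable (proj_ortho_compl_sub _ _))) addr0.
  by rewrite (@Pfix _ (W *m P *m X)) //; exact: (submx_trans (submxMr X (Psub W)) s1).
by have := key _ 1%:M; rewrite !mul1mx.
Qed.
End Proj2.

Section Fact.
Variable F : numClosedFieldType.
Lemma fact_sq k (X P : 'M[F]_k) : P *m P = P -> P *m X = X *m P ->
  (X *m (1%:M - P) - P) *m (1%:M - P - X *m P) = X.
Proof.
move=> PP PX.
have f1 : (1%:M - P) *m (1%:M - P) = 1%:M - P.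
  by rewrite mulmxBl mul1mx mulmxBr mulmx1 PP subrr subr0.
have f2 : P *m (1%:M - P) = 0 by rewrite mulmxBr mulmx1 PP subrr.
have f3 : (1%:M - P) *m P = 0 by rewrite mulmxBl mul1mx PP subrr.
have f4 : (1%:M - P) *m X = X *m (1%:M - P).
  by rewrite mulmxBl mulmxBr mul1mx mulmx1 PX.
have g1 : (X *m (1%:M - P) - P) *m (1%:M - P) = X *m (1%:M - P).
  by rewrite mulmxBl -mulmxA f1 f2 subr0.
have g2 : (X *m (1%:M - P) - P) *m (X *m P) = - (X *m P).
  rewrite mulmxBl -mulmxA (mulmxA (1%:M - P)) f4 -mulmxA f3 !mulmx0 sub0r.
  by rewrite mulmxA PX -mulmxA PP.
by rewrite (mulmxBr (X *m (1%:M - P) - P)) g1 g2 opprK mulmxBr mulmx1 subrK.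
Qed.
End Fact.

Section Fact2.
Variable F : numClosedFieldType.
Lemma Ekernel k r (X P : 'M[F]_k) (v : 'M_(r, k)) : P *m P = P -> P *m X = X *m P ->
  v *m (1%:M - P - X *m P) = 0 -> v *m P = v /\ v *m X = 0.
Proof.
move=> PP PX hv.
have e : (1%:M - P - X *m P) *m P = - (X *m P).
  by rewrite !mulmxBl mul1mx PP -mulmxA PP subrr sub0r.
have h1 : v *m X *m P = 0.
  have : v *m ((1%:M - P - X *m P) *m P) = 0 by rewrite mulmxA hv mul0mx.
  by rewrite e mulmxN mulmxA => /eqP; rewrite oppr_eq0 => /eqP.
have h2 : v *m P = v.
  move/eqP: hv; rewrite !mulmxBr mulmx1 mulmxA h1 subr0 subr_eq0 => /eqP.
  by move=> <-.
by split=> //; rewrite -h2 -mulmxA PX mulmxA h1.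
Qed.
End Fact2.

Section Cont.
Variable F : numClosedFieldType.

Lemma normM_le1 (a x : F) : `|x| <= 1 -> `|a * x| <= `|a|.
Proof. by move=> hx; rewrite normrM ler_piMr. Qed.

Lemma poly1_cont (c : {poly F}) : exists N L, [/\ 0 <= N, 0 <= L,
  (forall z, `|z| <= 1 -> `|c.[z]| <= N) &
  (forall z z0, `|z| <= 1 -> `|z0| <= 1 -> `|c.[z] - c.[z0]| <= L * `|z - z0|)].
Proof.
elim/poly_ind: c => [|p a [N [L [N0 L0 hN hL]]]].
  exists 0, 0; split=> // [z _|z z0 _ _]; by rewrite ?horner0 ?subrr normr0 ?mul0r.
exists (N + `|a|), (L + N); split.
- by rewrite addr_ge0.
- by rewrite addr_ge0.
- move=> z hz; rewrite hornerMXaddC; apply: le_trans (ler_normD _ _) _.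
  by rewrite lerD2r (le_trans (normM_le1 _ hz)) ?hN.
- move=> z z0 hz hz0; rewrite !hornerMXaddC.
  have -> : p.[z] * z + a - (p.[z0] * z0 + a) =
            (p.[z] - p.[z0]) * z + p.[z0] * (z - z0).
    by rewrite opprD addrACA subrr addr0 mulrBl mulrBr addrA subrK.
  apply: le_trans (ler_normD _ _) _; rewrite (mulrDl L); apply: lerD.
    by apply: le_trans (normM_le1 _ hz) _; exact: hL.
  by rewrite normrM ler_wpM2r ?normr_ge0 ?hN.
Qed.

Definition pe2 (q : {poly {poly F}}) (z w : F) := (q.[w%:P]).[z].

Lemma pe2MXaddC q c z w : pe2 (q * 'X + c%:P) z w = pe2 q z w * w + c.[z].
Proof. by rewrite /pe2 hornerMXaddC hornerD hornerM hornerC. Qed.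

Lemma poly2_cont (q : {poly {poly F}}) : exists N L, [/\ 0 <= N, 0 <= L,
  (forall z w, `|z| <= 1 -> `|w| <= 1 -> `|pe2 q z w| <= N) &
  (forall z w z0 w0, `|z| <= 1 -> `|w| <= 1 -> `|z0| <= 1 -> `|w0| <= 1 ->
     `|pe2 q z w - pe2 q z0 w0| <= L * (`|z - z0| + `|w - w0|))].
Proof.
elim/poly_ind: q => [|q c [N [L [N0 L0 hN hL]]]].
  exists 0, 0; split=> // [z w _ _|z w z0 w0 _ _ _ _];
  by rewrite /pe2 !horner0 ?subrr normr0 ?mul0r.
have [Nc [Lc [Nc0 Lc0 hNc hLc]]] := poly1_cont c.
exists (N + Nc), (L + N + Lc); split.
- by rewrite addr_ge0.
- by rewrite !addr_ge0.
- move=> z w hz hw; rewrite pe2MXaddC; apply: le_trans (ler_normD _ _) _.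
  by apply: lerD; [rewrite (le_trans (normM_le1 _ hw)) ?hN | exact: hNc].
- move=> z w z0 w0 hz hw hz0 hw0; rewrite !pe2MXaddC.
  set a := pe2 q z w; set a0 := pe2 q z0 w0.
  have -> : a * w + c.[z] - (a0 * w0 + c.[z0]) =
            ((a - a0) * w + a0 * (w - w0)) + (c.[z] - c.[z0]).
    by rewrite opprD addrACA; congr (_ + _); rewrite mulrBl mulrBr addrA subrK.
  set d := `|z - z0| + `|w - w0|.
  have dz : `|z - z0| <= d by rewrite lerDl normr_ge0.
  have dw : `|w - w0| <= d by rewrite lerDr normr_ge0.
  apply: le_trans (ler_normD _ _) _; rewrite (mulrDl (L + N)) (mulrDl L); apply: lerD.
    apply: le_trans (ler_normD _ _) _; apply: lerD.
      by apply: le_trans (normM_le1 _ hw) _; exact: hL.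
    rewrite normrM; apply: le_trans (ler_wpM2r (normr_ge0 _) (hN _ _ hz0 hw0)) _.
    by rewrite ler_wpM2l.
  by apply: le_trans (hLc _ _ hz hz0) _; rewrite ler_wpM2l.
Qed.
End Cont.

Section Real.
Variable R : realType.
Local Notation C := (R[i]).
Local Notation rc := (real_complex R).

Definition nr (x : C) : R := complex.Re `|x|.
Lemma nrE (x : C) : `|x| = (rc (nr x)).
Proof. by rewrite /nr normc_def. Qed.
Lemma nr_ge0 (x : C) : 0 <= nr x.
Proof. by rewrite -lecR -nrE /= normr_ge0. Qed.
Lemma nrD (x y : C) : nr (x + y) <= nr x + nr y.
Proof. by rewrite -lecR rmorphD /= -!nrE ler_normD. Qed.
Lemma nr_lt (x : C) (e : R) : (`|x| < (rc e)) = (nr x < e).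
Proof. by rewrite nrE ltcR. Qed.
Lemma nr_le (x : C) (e : R) : (`|x| <= (rc e)) = (nr x <= e).
Proof. by rewrite nrE lecR. Qed.
Lemma nr_eq (x : C) (e : R) : (`|x| = (rc e)) <-> (nr x = e).
Proof. by rewrite nrE; split=> [[]|->]. Qed.
Lemma nr_eq0 (x : C) : nr x = 0 -> x = 0.
Proof. by move/nr_eq; rewrite rmorph0 => /eqP; rewrite normr_eq0 => /eqP. Qed.
Lemma nrB (x y : C) : nr (x - y) = nr (y - x).
Proof. by rewrite /nr -normrN opprB. Qed.
Lemma ge0_re (x : C) : 0 <= x -> x = (rc (complex.Re x)).
Proof. by move=> hx; rewrite {1}[x]complexE ger0_Im // mulr0 addr0. Qed.

Lemma small_le (a k : R) : 0 <= k -> (forall e, 0 < e -> a <= k * e) -> a <= 0.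
Proof.
move=> k0 h; rewrite leNgt; apply/negP => a0.
have k1 : 0 < k + 1 by lra.
pose e := a / (k + 1).
have e0 : 0 < e by rewrite /e divr_gt0.
have he : e * (k + 1) = a by rewrite /e mulfVK // gt_eqF.
have := h e e0; nra.
Qed.

Lemma nr_lt1 (x : C) : (`|x| < 1) = (nr x < 1).
Proof. by rewrite -(rmorph1 (real_complex R)) nr_lt. Qed.
Lemma nr_le1 (x : C) : (`|x| <= 1) = (nr x <= 1).
Proof. by rewrite -(rmorph1 (real_complex R)) nr_le. Qed.
Lemma nr_eq1 (x : C) : (`|x| = 1) <-> (nr x = 1).
Proof. by rewrite -(rmorph1 (real_complex R)) nr_eq. Qed.
Lemma nr_tri (x y : C) : nr x <= nr (x - y) + nr y.
Proof. by have := nrD (x - y) y; rewrite subrK. Qed.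
End Real.

Section Unit.
Variable F : numClosedFieldType.
Variables (m n : nat) (U : 'M[F]_(m + n)).
Hypothesis hU : U *m U^t* = 1%:M.
Hypothesis hU2 : U^t* *m U = 1%:M.
Local Notation A := (ulsubmx U). Local Notation B := (ursubmx U).
Local Notation C := (dlsubmx U). Local Notation D := (drsubmx U).

Lemma hUa : U^t* *m U^t* ^t* = 1%:M.
Proof. by rewrite trmxCK. Qed.

Lemma mulU (x : 'rV_m) (y : 'rV_n) :
  row_mx x y *m U = row_mx (x *m A + y *m C) (x *m B + y *m D).
Proof. by rewrite -{1}(submxK U) mul_row_block. Qed.

Lemma Uadj : U^t* = block_mx (A^t*) (C^t*) (B^t*) (D^t*).
Proof. by rewrite -{1}(submxK U) tr_block_mx map_block_mx. Qed.

Lemma mulUa (x : 'rV_m) (y : 'rV_n) :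
  row_mx x y *m U^t* = row_mx (x *m A^t* + y *m B^t*) (x *m C^t* + y *m D^t*).
Proof. by rewrite Uadj mul_row_block. Qed.

Lemma nrmU (v : 'rV_(m + n)) : nrm (v *m U) = nrm v.
Proof. exact: nrm_unitary. Qed.
Lemma nrmUa (v : 'rV_(m + n)) : nrm (v *m U^t*) = nrm v.
Proof. exact/nrm_unitary/hUa. Qed.

Lemma UUa (v : 'rV_(m + n)) : v *m U *m U^t* = v.
Proof. by rewrite -mulmxA hU mulmx1. Qed.
Lemma UaU (v : 'rV_(m + n)) : v *m U^t* *m U = v.
Proof. by rewrite -mulmxA hU2 mulmx1. Qed.

Lemma unit_Dz (z : F) : `|z| < 1 -> (1%:M - z *: D) \in unitmx.
Proof.
move=> hz; rewrite unitmxE unitfE; apply/negP => /det0P [v v0 hv].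
have e1 : v = z *: (v *m D).
  by move/eqP: hv; rewrite mulmxBr mulmx1 subr_eq0 -scalemxAr => /eqP.
have := nrmU (row_mx 0 v); rewrite mulU !mul0mx !add0r !nrm_row nrm0 add0r => e2.
have h3 : nrm (v *m D) <= nrm v by rewrite -e2 lerDr nrm_ge0.
have : nrm v = 0.
  apply: (@num_aux _ _ (`|z| ^+ 2)); rewrite ?nrm_ge0 ?exprn_ge0 //.
    by rewrite expr_lt1.
  by rewrite {1}e1 nrmZ ler_wpM2l ?exprn_ge0.
by move/nrm_eq0=> v00; rewrite v00 eqxx in v0.
Qed.

Lemma unit_Aw (w : F) : `|w| < 1 -> (1%:M - w *: A^t*) \in unitmx.
Proof.
move=> hw; rewrite unitmxE unitfE; apply/negP => /det0P [v v0 hv].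
have e1 : v = w *: (v *m A^t*).
  by move/eqP: hv; rewrite mulmxBr mulmx1 subr_eq0 -scalemxAr => /eqP.
have := nrmUa (row_mx v 0); rewrite mulUa !mul0mx !addr0 !nrm_row nrm0 addr0 => e2.
have h3 : nrm (v *m A^t*) <= nrm v by rewrite -e2 lerDl nrm_ge0.
have : nrm v = 0.
  apply: (@num_aux _ _ (`|w| ^+ 2)); rewrite ?nrm_ge0 ?exprn_ge0 //.
    by rewrite expr_lt1.
  by rewrite {1}e1 nrmZ ler_wpM2l ?exprn_ge0.
by move/nrm_eq0=> v00; rewrite v00 eqxx in v0.
Qed.

Lemma E1 (z w : F) : `|z| < 1 ->
 (\det (A + z *: (B *m invmx (1%:M - z *: D) *m C) - w%:M) == 0) =
 (\det (block_mx (A - w%:M) (z *: B) C (z *: D - 1%:M)) == 0).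
Proof.
move=> hz; have uD := unit_Dz hz; set Di := invmx _.
have eD : z *: D - 1%:M = - (1%:M - z *: D) by rewrite opprB.
apply/det0P/det0P.
- case=> x x0 hx; exists (row_mx x (z *: (x *m B *m Di))).
    by rewrite row_mx_eq0 negb_and x0.
  rewrite mul_row_block; apply/eqP; rewrite row_mx_eq0; apply/andP; split; apply/eqP.
    rewrite -hx !mulmxBr !mulmxDr -!scalemxAl -!scalemxAr !mulmxA.
    by rewrite addrAC.
  rewrite eD mulmxN -scalemxAl -!mulmxA mulVmx // mulmx1 -scalemxAr.
  by rewrite subrr.
- case=> v v0 hv; rewrite -(hsubmxK v) mul_row_block in hv.
  move/eqP: hv; rewrite row_mx_eq0 => /andP[/eqP h1 /eqP h2].
  set x := lsubmx v in h1 h2; set y := rsubmx v in h1 h2.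
  have ey : y = z *: (x *m B *m Di).
    move/eqP: h2; rewrite eD mulmxN addr_eq0 opprK => /eqP h2.
    by rewrite -[y]mulmx1 -{1}(mulmxV uD) mulmxA -h2 -scalemxAr -scalemxAl.
  exists x.
    apply: contraNneq v0 => x0; apply/eqP.
    by rewrite -(hsubmxK v) -/x -/y ey x0 !mul0mx scaler0 row_mx0.
  rewrite -h1 ey !mulmxBr !mulmxDr -!scalemxAl -!scalemxAr !mulmxA.
  by rewrite addrAC.
Qed.

Lemma E2 (z w : F) : `|w| < 1 ->
 (\det (D^t* + w *: (B^t* *m invmx (1%:M - w *: A^t*) *m C^t*) - z%:M) == 0) =
 (\det (block_mx (A - w%:M) (z *: B) C (z *: D - 1%:M)) == 0).
Proof.
move=> hw; have uA := unit_Aw hw; set Ai := invmx _.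
apply/det0P/det0P.
- case=> y y0 hy.
  pose x := w *: (y *m B^t* *m Ai).
  pose a := x *m A^t* + y *m B^t*.
  have ex : x = w *: a.
    have : x *m (1%:M - w *: A^t*) = w *: (y *m B^t*).
      by rewrite /x -scalemxAl -!mulmxA mulVmx // mulmx1.
    rewrite mulmxBr mulmx1 -scalemxAr => /eqP; rewrite subr_eq => /eqP ->.
    by rewrite /a scalerDr addrC.
  have ey : x *m C^t* + y *m D^t* = z *: y.
    move: hy; rewrite !mulmxBr !mulmxDr mul_mx_scalar => /eqP; rewrite subr_eq0.
    move/eqP <-; rewrite addrC /x -!scalemxAl -!scalemxAr !mulmxA.
    by [].
  have e1 : row_mx x y *m U^t* = row_mx a (z *: y) by rewrite mulUa ey.
  have e2 : row_mx x y = row_mx a (z *: y) *m U by rewrite -e1 UaU.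
  move: (e2); rewrite mulU => /eq_row_mx [e3 e4].
  exists (row_mx a (z *: y)).
    rewrite -e1; apply: contraNneq y0 => h.
    have : row_mx x y = 0 by rewrite -[row_mx x y]UaU h mul0mx.
    by move/eqP; rewrite row_mx_eq0 => /andP[_].
  rewrite mul_row_block; apply/eqP; rewrite row_mx_eq0; apply/andP; split; apply/eqP.
    rewrite mulmxBr mul_mx_scalar addrAC -ex.
    by rewrite -e3 subrr.
  rewrite mulmxBr mulmx1 -!scalemxAr -scalemxAl addrA -scalerDr [z *: (y *m D)]scalemxAl -e4.
  by rewrite subrr.
- case=> v v0 hv; rewrite -(hsubmxK v) mul_row_block in hv.
  move/eqP: hv; rewrite row_mx_eq0 => /andP[/eqP h1 /eqP h2].
  set x := lsubmx v in h1 h2; set y := rsubmx v in h1 h2.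
  pose y' := x *m B + y *m D.
  have hy : y = z *: y'.
    move/eqP: h2; rewrite mulmxBr mulmx1 -!scalemxAr addrA -scalerDr subr_eq0.
    by move/eqP.
  have hx : x *m A + y *m C = w *: x.
    move/eqP: h1; rewrite mulmxBr mul_mx_scalar addrAC subr_eq0.
    by move/eqP.
  have e1 : row_mx x y *m U = row_mx (w *: x) y' by rewrite mulU hx.
  have e2 : row_mx x y = row_mx (w *: x) y' *m U^t* by rewrite -e1 UUa.
  move: e2; rewrite mulUa => /eq_row_mx [e3 e4].
  have ex : x = y' *m B^t* *m Ai.
    have : x *m (1%:M - w *: A^t*) = y' *m B^t*.
      rewrite mulmxBr mulmx1 {1}e3 -scalemxAr -scalemxAl.
      by rewrite addrC addKr.
    by move=> <-; rewrite -mulmxA mulmxV // mulmx1.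
  exists y'.
    apply: contraNneq v0 => y'0; apply/eqP.
    have y00 : y = 0 by rewrite hy y'0 scaler0.
    have x00 : x = 0 by rewrite ex y'0 !mul0mx.
    by rewrite -(hsubmxK v) -/x -/y x00 y00 row_mx0.
  rewrite !mulmxBr !mulmxDr mul_mx_scalar -scalemxAr !mulmxA -ex -hy.
  by rewrite scalemxAl [_ + w *: x *m _]addrC -e4 subrr.
Qed.

Section Dist.
Variables (SA : 'M[F]_m) (SD : 'M[F]_n).
Hypothesis gSA : good A C B SA.
Hypothesis mSA : forall r (T : 'M_(r, m)), good A C B T -> (T <= SA)%MS.
Hypothesis gSD : good D B C SD.
Hypothesis mSD : forall r (T : 'M_(r, n)), good D B C T -> (T <= SD)%MS.
Local Notation PA := (proj_ortho SA).
Local Notation PD := (proj_ortho SD).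

Definition Mb (z w : F) := block_mx (A - w%:M) (z *: B) C (z *: D - 1%:M).
Definition Mp (z w : F) := block_mx ((A - w%:M) *m (1%:M - PA) - PA) (z *: B) C
  ((z *: D - 1%:M) *m (1%:M - PD) - PD).
Definition EA (w : F) := 1%:M - PA - (A - w%:M) *m PA.
Definition ED (z : F) := 1%:M - PD - (z *: D - 1%:M) *m PD.
Definition Eb (z w : F) := block_mx (EA w) 0 0 (ED z).

Lemma PAc (w : F) : PA *m (A - w%:M) = (A - w%:M) *m PA.
Proof. by rewrite mulmxBr mulmxBl (PX gSA) scalar_mxC. Qed.
Lemma PDc (z : F) : PD *m (z *: D - 1%:M) = (z *: D - 1%:M) *m PD.
Proof.
by rewrite mulmxBr mulmxBl mulmx1 mul1mx -scalemxAr -scalemxAl (PX gSD).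
Qed.

Lemma Mfact (z w : F) : Mb z w = Mp z w *m Eb z w.
Proof.
rewrite /Mb /Mp /Eb mulmx_block !mulmx0 !addr0 !add0r /EA /ED.
rewrite (fact_sq (Pidem SA) (PAc w)) (fact_sq (Pidem SD) (PDc z)).
congr block_mx.
  rewrite -scalemxAl; congr (_ *: _).
  rewrite !mulmxBr mulmx1 (YP gSD) subr0 mulmxA mulmxBr mulmxBl mulmx1 (YP gSD).
  rewrite subr0 -scalemxAr -scalemxAl -mulmxA -(PX gSD) mulmxA (YP gSD) mul0mx.
  by rewrite scaler0 subr0.
rewrite !mulmxBr mulmx1 (YP gSA) subr0 mulmxA mulmxBr mulmxBl.
rewrite -mulmxA -(PX gSA) mulmxA (YP gSA) mul0mx mul_mx_scalar -scalemxAl (YP gSA).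
by rewrite scaler0 subr0 subr0.
Qed.

Lemma detMb (z w : F) : \det (Mb z w) = \det (Mp z w) * (\det (EA w) * \det (ED z)).
Proof. by rewrite Mfact det_mulmx /Eb det_ublock. Qed.

Lemma EA_neq0 (w : F) : `|w| < 1 -> \det (EA w) != 0.
Proof.
move=> hw; apply/negP => /det0P [v v0 hv].
have [h1 h2] := Ekernel (Pidem SA) (PAc w) hv.
have vS : (v <= SA)%MS by rewrite -h1 Psub.
have vB : v *m B = 0.
  by case/and4P: gSA => _ _ _ s4; apply/sub_kermxP; exact: submx_trans vS s4.
have vA : v *m A = w *: v.
  by move/eqP: h2; rewrite mulmxBr mul_mx_scalar subr_eq0 => /eqP.
have := nrmU (row_mx v 0); rewrite mulU !mul0mx !addr0 vA vB !nrm_row nrm0 !addr0 nrmZ.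
move=> e; have : nrm v = 0.
  apply: (@num_aux _ _ (`|w| ^+ 2)); rewrite ?nrm_ge0 ?exprn_ge0 ?e //.
  by rewrite expr_lt1.
by move/nrm_eq0 => v00; rewrite v00 eqxx in v0.
Qed.

Lemma ED_neq0 (z : F) : `|z| < 1 -> \det (ED z) != 0.
Proof.
move=> hz; apply/negP => /det0P [v v0 hv].
have [h1 h2] := Ekernel (Pidem SD) (PDc z) hv.
have u := unit_Dz hz.
have : v *m (1%:M - z *: D) = 0 by rewrite -opprB mulmxN h2 oppr0.
move=> h3; have : v = 0 by rewrite -[v]mulmx1 -(mulmxV u) mulmxA h3 mul0mx.
by move=> v00; rewrite v00 eqxx in v0.
Qed.

Lemma Mb_ker (z w : F) (x : 'rV_m) (y : 'rV_n) : row_mx x y *m Mb z w = 0 ->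
  [/\ y = z *: (x *m B + y *m D), x *m A + y *m C = w *: x &
      nrm x + `|z| ^+ 2 * nrm (x *m B + y *m D) =
      `|w| ^+ 2 * nrm x + nrm (x *m B + y *m D)].
Proof.
rewrite /Mb mul_row_block => /eqP; rewrite row_mx_eq0 => /andP[/eqP h1 /eqP h2].
have hy : y = z *: (x *m B + y *m D).
  move/eqP: h2; rewrite mulmxBr mulmx1 -!scalemxAr addrA -scalerDr subr_eq0.
  by move/eqP.
have hx : x *m A + y *m C = w *: x.
  move/eqP: h1; rewrite mulmxBr mul_mx_scalar addrAC subr_eq0.
  by move/eqP.
split=> //.
have := nrmU (row_mx x y); rewrite mulU hx !nrm_row nrmZ => ->.
by congr (_ + _); rewrite [in RHS]hy nrmZ.
Qed.

Lemma bdD (z w : F) : `|z| = 1 -> `|w| < 1 -> \det (Mp z w) != 0.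
Proof.
move=> hz hw; apply/negP => /det0P [v v0 hv].
have hb : v *m Mb z w = 0 by rewrite Mfact mulmxA hv mul0mx.
rewrite -(hsubmxK v) in hb v0 hv.
set x := lsubmx v in hb v0 hv; set y := rsubmx v in hb v0 hv.
have [ey ex en] := Mb_ker hb.
rewrite hz expr1n mul1r in en; move/addIr: en => en.
have x0 : x = 0.
  apply: nrm_eq0; apply: (@num_aux _ _ (`|w| ^+ 2)); rewrite ?nrm_ge0 ?exprn_ge0 -?en //.
  by rewrite expr_lt1.
rewrite x0 !mul0mx !add0r scaler0 in ey ex.
have z0 : z != 0 by apply/eqP => z0; rewrite z0 normr0 in hz; move: hz; apply/eqP; rewrite eq_sym oner_eq0.
have yD : y *m D = z^-1 *: y by rewrite {2}ey scalerA mulVf // scale1r.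
have e1 : row_mx 0 y *m U = z^-1 *: row_mx 0 y.
  by rewrite mulU !mul0mx !add0r ex yD scale_row_mx scaler0.
have e2 : row_mx 0 y = z^-1 *: (row_mx 0 y *m U^t*).
  by rewrite scalemxAl -e1 UUa.
move: e2; rewrite mulUa !mul0mx !add0r scale_row_mx => /eq_row_mx [e3 e4].
have yB : y *m B^t* = 0.
  by move/eqP: e3; rewrite eq_sym scalemx_eq0 invr_eq0 (negbTE z0) => /eqP.
have yDa : y *m D^t* = z *: y by rewrite {2}e4 scalerA mulfV // scale1r.
have gy : good D B C y.
  apply/and4P; split.
  - by rewrite yD scalemx_sub.
  - by rewrite yDa scalemx_sub.
  - by apply/sub_kermxP.
  - by apply/sub_kermxP.
have yP : y *m PD = y by apply: Pfix; exact: mSD.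
move: hv; rewrite x0 /Mp mul_row_block !mul0mx !add0r ex mulmxBr mulmxA yP.
have -> : y *m (z *: D - 1%:M) = 0 by rewrite mulmxBr mulmx1 -scalemxAr -ey subrr.
rewrite mul0mx sub0r => /eqP; rewrite row_mx_eq0 oppr_eq0 => /andP[_ /eqP y0].
by rewrite x0 y0 row_mx0 eqxx in v0.
Qed.

Lemma bdA (z w : F) : `|z| < 1 -> `|w| = 1 -> \det (Mp z w) != 0.
Proof.
move=> hz hw; apply/negP => /det0P [v v0 hv].
have hb : v *m Mb z w = 0 by rewrite Mfact mulmxA hv mul0mx.
rewrite -(hsubmxK v) in hb v0 hv.
set x := lsubmx v in hb v0 hv; set y := rsubmx v in hb v0 hv.
have [ey ex en] := Mb_ker hb.
rewrite hw expr1n mul1r in en; move/addrI: en => en.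
have y'0 : x *m B + y *m D = 0.
  apply: nrm_eq0; apply: (@num_aux _ _ (`|z| ^+ 2)); rewrite ?nrm_ge0 ?exprn_ge0 ?en //.
  by rewrite expr_lt1.
have y0 : y = 0 by rewrite ey y'0 scaler0.
rewrite y0 !mul0mx !addr0 in ex y'0.
have w0 : w != 0 by apply/eqP => w0; rewrite w0 normr0 in hw; move: hw; apply/eqP; rewrite eq_sym oner_eq0.
have e1 : row_mx x 0 *m U = w *: row_mx x 0.
  by rewrite mulU !mul0mx !addr0 ex y'0 scale_row_mx scaler0.
have e2 : row_mx x 0 = w *: (row_mx x 0 *m U^t*).
  by rewrite scalemxAl -e1 UUa.
move: e2; rewrite mulUa !mul0mx !addr0 scale_row_mx => /eq_row_mx [e3 e4].
have xC : x *m C^t* = 0.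
  by move/eqP: e4; rewrite eq_sym scalemx_eq0 (negbTE w0) => /eqP.
have xAa : x *m A^t* = w^-1 *: x by rewrite {2}e3 scalerA mulVf // scale1r.
have gx : good A C B x.
  apply/and4P; split.
  - by rewrite ex scalemx_sub.
  - by rewrite xAa scalemx_sub.
  - by apply/sub_kermxP.
  - by apply/sub_kermxP.
have xP : x *m PA = x by apply: Pfix; exact: mSA.
move: hv; rewrite y0 /Mp mul_row_block !mul0mx !addr0 mulmxBr mulmxA xP.
have -> : x *m (A - w%:M) = 0 by rewrite mulmxBr mul_mx_scalar ex subrr.
rewrite mul0mx sub0r -scalemxAr y'0 scaler0 => /eqP; rewrite row_mx_eq0 oppr_eq0 => /andP[/eqP x0 _].
by rewrite x0 y0 row_mx0 eqxx in v0.
Qed.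

Definition K0 := block_mx (A *m (1%:M - PA) - PA) 0 C (- (1%:M - PD) - PD).
Definition Kw := block_mx (- (1%:M - PA)) 0 0 (0 : 'M_n).
Definition Kz := block_mx (0 : 'M_m) B 0 (D *m (1%:M - PD)).

Lemma Mp_aff (z w : F) : Mp z w = K0 + w *: Kw + z *: Kz.
Proof.
rewrite /Mp /K0 /Kw /Kz !scale_block_mx !add_block_mx !scaler0 !addr0 !add0r.
congr block_mx.
  by rewrite mulmxBl mul_scalar_mx scalerN addrAC.
by rewrite mulmxBl mul1mx -scalemxAl [RHS]addrC addrA.
Qed.

Definition cP (c : F) : {poly {poly F}} := c%:P%:P.
Definition Mpoly := map_mx cP K0 + 'X *: map_mx cP Kw + ('X)%:P *: map_mx cP Kz.

Lemma pe2_det (z w : F) : pe2 (\det Mpoly) z w = \det (Mp z w).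
Proof.
rewrite /pe2 -!horner_evalE -!det_map_mx Mp_aff; congr (\det _).
rewrite /Mpoly !map_mxD !map_mxZ /= !horner_evalE hornerX hornerC hornerC hornerX.
have hid : forall K : 'M_(m + n), map_mx (horner_eval z) (map_mx (horner_eval w%:P) (map_mx cP K)) = K.
  by move=> K; apply/matrixP => i j; rewrite !mxE /= /cP !horner_evalE !hornerC.
by rewrite !hid.
Qed.
End Dist.
End Unit.

Theorem mainTheorem4 (R : realType) (m n : nat) (hm : (0 < m)%N) (hn : (0 < n)%N)
  (U : 'M[R[i]]_(m + n)) (hU : U \is unitarymx) (hU' : U^t* \is unitarymx) :
  let A := ulsubmx U in let B := ursubmx U in
  let C := dlsubmx U in let D := drsubmx U in
  let Psi := fun z : R[i] => A + z *: (B *m invmx (1%:M - z *: D) *m C) in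
  let Psi' := fun w : R[i] =>
      D^t* + w *: (B^t* *m invmx (1%:M - w *: A^t*) *m C^t*) in
  let V := fun x : R[i] * R[i] =>
      in_bidisk x /\
      \det (block_mx (A - x.2%:M) (x.1 *: B) C (x.1 *: D - 1%:M)) = 0 in
  (forall z w : R[i], in_bidisk (z, w) ->
     ((\det (Psi z - w%:M) = 0 <-> \det (Psi' w - z%:M) = 0) /\
      (\det (Psi' w - z%:M) = 0 <-> V (z, w)))) /\
  ((exists x, V x) -> distinguished_variety V).
Proof.
move=> A B C D Psi Psi' V.
have hU1 : U *m U^t* = 1%:M by apply/unitarymxP.
have hU2 : U^t* *m U = 1%:M by move/unitarymxP: hU'; rewrite trmxCK.
split.
  move=> z w [hz hw]; rewrite /in_disk /= in hz hw.
  have e1 := E1 hU1 w hz; have e2 := E2 hU1 hU2 z hw.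
  split.
    by split=> h; apply/eqP; [rewrite e2 -e1 | rewrite e1 -e2]; apply/eqP.
  split=> [h|[_ h]]; last by apply/eqP; rewrite e2; apply/eqP.
  by split; [split | apply/eqP; rewrite -e2; apply/eqP].
move=> hne.
have [SA [gSA mSA]] := exists_max A C B.
have [SD [gSD mSD]] := exists_max D B C.
set p := \det (Mpoly U SA SD).
have pE : forall z w, peval2 p z w = \det (Mp U SA SD z w).
  by move=> z w; exact: (pe2_det U SA SD z w).
have key : forall z w : R[i], `|z| < 1 -> `|w| < 1 ->
    (\det (block_mx (A - w%:M) (z *: B) C (z *: D - 1%:M)) = 0 <-> peval2 p z w = 0).
  move=> z w hz hw; rewrite pE.
  change (\det (Mb U z w) = 0 <-> \det (Mp U SA SD z w) = 0).
  rewrite (detMb gSA gSD); split=> [/eqP|->]; last by rewrite mul0r.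
  rewrite !mulf_eq0 (negbTE (EA_neq0 hU1 gSA hw)) (negbTE (ED_neq0 hU1 gSD hz)) !orbF.
  by move/eqP.
split=> //; exists p; split.
  move=> [z w]; rewrite /V /in_bidisk /in_disk /=.
  split=> [[[hz hw] h]|[[hz hw] h]]; (split; first by []).
    by apply/key.
  by apply/key.
move=> [z0 w0] hcl [hb1 hb2].
have hz0 : nr z0 <= 1.
  rewrite leNgt; apply/negP => h.
  have e0 : 0 < nr z0 - 1 by rewrite subr_gt0.
  have [[z w] [[hz hw] [n1 n2]]] := hb1 _ e0.
  rewrite /in_disk /= nr_lt1 in hz; rewrite /= nr_lt in n1.
  by have := nr_tri z0 z; lra.
have hw0 : nr w0 <= 1.
  rewrite leNgt; apply/negP => h.
  have e0 : 0 < nr w0 - 1 by rewrite subr_gt0.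
  have [[z w] [[hz hw] [n1 n2]]] := hb1 _ e0.
  rewrite /in_disk /= nr_lt1 in hw; rewrite /= nr_lt in n2.
  by have := nr_tri w0 w; lra.
have hb : 1 <= nr z0 \/ 1 <= nr w0.
  case: (lerP 1 (nr z0)) => h1; first by left.
  case: (lerP 1 (nr w0)) => h2; first by right.
  exfalso.
  have [e [e0 ez ew]] : exists e : R, [/\ 0 < e, e <= 1 - nr z0 & e <= 1 - nr w0].
    case: (lerP (nr z0) (nr w0)) => h.
      by exists (1 - nr w0); split; lra.
    by exists (1 - nr z0); split; lra.
  have [[z w] [hnb [n1 n2]]] := hb2 e e0.
  apply: hnb; rewrite /in_bidisk /in_disk /= !nr_lt1.
  rewrite /= nr_lt nrB in n1; rewrite /= nr_lt nrB in n2.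
  by split; [have := nr_tri z z0 | have := nr_tri w w0]; lra.
have hq : \det (Mp U SA SD z0 w0) = 0.
  rewrite -pE; apply: nr_eq0; apply/eqP; rewrite eq_le nr_ge0 andbT.
  have [N [L [N0 L0 _ hL]]] := poly2_cont p.
  have l0 : 0 <= complex.Re L by rewrite -(@lecR R) -ge0_re.
  apply: (@small_le _ _ (2 * complex.Re L)); first by lra.
  move=> e e0.
  have [[z w] [[[hz hw] hV] [n1 n2]]] := hcl e e0.
  rewrite /in_disk /= in hz hw; rewrite /= nr_lt in n1; rewrite /= nr_lt in n2.
  have hpz : pe2 p z w = 0 by exact: (proj1 (key z w hz hw) hV).
  change (nr (pe2 p z0 w0) <= 2 * complex.Re L * e).
  have hz0' : `|z0| <= 1 by rewrite nr_le1.
  have hw0' : `|w0| <= 1 by rewrite nr_le1.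
  have h := hL z0 w0 z w hz0' hw0' (ltW hz) (ltW hw).
  rewrite hpz subr0 nrE (ge0_re L0) (nrE (z0 - z)) (nrE (w0 - w)) -rmorphD -rmorphM lecR in h.
  nra.
have hzw : forall x : R[i], nr x <= 1 -> nr x < 1 \/ nr x = 1.
  by move=> x hx; case: (ltrP (nr x) 1) => h; [left | right; lra].
split; rewrite /in_circle /= !nr_eq1.
  case: (hzw _ hz0) => // hlt; exfalso.
  have hw1 : nr w0 = 1 by case: hb; lra.
  move: (bdA hU1 gSA mSA gSD (z := z0) (w := w0)).
  by rewrite nr_lt1 hlt; move/nr_eq1: hw1 => hw1 /(_ isT hw1); rewrite hq eqxx.
case: (hzw _ hw0) => // hlt; exfalso.
have hz1 : nr z0 = 1 by case: hb; lra.
move: (bdD hU1 gSA gSD mSD (z := z0) (w := w0)).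
by rewrite nr_lt1 hlt; move/nr_eq1: hz1 => hz1 /(_ hz1 isT); rewrite hq eqxx.
Qed.
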